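(* Let $\mathbf{M}^2$ be a connected smooth oriented surface and $\alpha:\mathbf{M}^2\to\mathbf{R}^4$ a smooth immersion. Suppose $\nu$ is a unit normal vector field along $\alpha$ such that $II_\nu=\langle d^2\alpha,\nu\rangle=\lambda I$ for a nonzero constant $\lambda$, and that the Gaussian curvature satisfies $K(p)\neq\lambda^2$ for all $p\in\mathbf{M}^2$. Then $\alpha$ is hyperspherical (its image lies in a hypersphere of radius $1/|\lambda|$).
   Context: In a chart $(u,v)$, $E=\langle\alpha_u,\alpha_u\rangle$, $F=\langle\alpha_u,\alpha_v\rangle$, $G=\langle\alpha_v,\alpha_v\rangle$, $I=E\,du^2+2F\,du\,dv+G\,dv^2$. For a unit normal field $\nu$, $II_\nu=e_\nu du^2+2f_\nu du\,dv+g_\nu dv^2$ with $e_\nu=\langle\alpha_{uu},\nu\rangle$, $f_\nu=\langle\alpha_{uv},\nu\rangle$, $g_\nu=\langle\alpha_{vv},\nu\rangle$. For an orthonormal normal frame $\{\nu_1,\nu_2\}$ with coefficients $e_i,f_i,g_i$ of $II_{\nu_i}$, the Gaussian curvature is $K=\frac{e_1g_1-f_1^2+e_2g_2-f_2^2}{EG-F^2}$. An immersion is hyperspherical if its image is contained in a hypersphere (round $3$-sphere) of $\mathbf{R}^4$. *)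

(* Defs.v *)
From HB Require Import structures.
From mathcomp Require Import all_boot all_order all_algebra.
From mathcomp Require Import all_classical all_reals all_analysis.
Set Implicit Arguments. Unset Strict Implicit. Unset Printing Implicit Defensive.
Import Order.TTheory GRing.Theory Num.Theory.
Import numFieldNormedType.Exports.
Local Open Scope classical_set_scope.
Local Open Scope ring_scope.

Definition dot4 {R : realType} (a b : 'rV[R]_4) : R := \sum_(k < 4) a 0 k * b 0 k.

Definition pu {R : realType} (f : R * R -> R) : R * R -> R :=
  fun x => derive1 (fun t => f (t, x.2)) x.1.
Definition pv {R : realType} (f : R * R -> R) : R * R -> R :=
  fun x => derive1 (fun t => f (x.1, t)) x.2.

Fixpoint pd {R : realType} (ds : seq bool) (f : R * R -> R) : R * R -> R :=
  match ds with
  | [::] => f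
  | d :: ds' => (if d then pv else pu) (pd ds' f)
  end.

Definition smooth_on {R : realType} (W : set (R * R)) (f : R * R -> R) : Prop :=
  forall (ds : seq bool) (x : R * R), W x ->
    [/\ derivable (fun t => pd ds f (t, x.2)) x.1 1,
        derivable (fun t => pd ds f (x.1, t)) x.2 1 &
        {for x, continuous (pd ds f)}].

Definition vpu {R : realType} (a : R * R -> 'rV[R]_4) : R * R -> 'rV[R]_4 :=
  fun x => \row_k pu (fun y => a y 0 k) x.
Definition vpv {R : realType} (a : R * R -> 'rV[R]_4) : R * R -> 'rV[R]_4 :=
  fun x => \row_k pv (fun y => a y 0 k) x.

Definition oriented_smooth_atlas {R : realType} (M : topologicalType) (I : Type)
    (U : I -> set (R * R)) (phi : I -> R * R -> M) : Prop :=
  [/\ forall i, open (U i),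
      (forall i x y, U i x -> U i y -> phi i x = phi i y -> x = y),
      (forall i, {within U i, continuous (phi i)}) /\
      (forall i (V : set (R * R)), open V -> V `<=` U i -> open (phi i @` V)),
      forall p : M, exists i x, U i x /\ phi i x = p &
      forall i j, exists psi : R * R -> R * R,
        let W := U i `&` (phi i @^-1` (phi j @` U j)) in
        [/\ forall x, W x -> U j (psi x) /\ phi j (psi x) = phi i x,
            smooth_on W (fun y => (psi y).1),
            smooth_on W (fun y => (psi y).2) &
            forall x, W x ->
              0 < pu (fun y => (psi y).1) x * pv (fun y => (psi y).2) x
                  - pv (fun y => (psi y).1) x * pu (fun y => (psi y).2) x]].

Definition smooth_map {R : realType} {M : topologicalType} {I : Type}
    (U : I -> set (R * R)) (phi : I -> R * R -> M) (F : M -> 'rV[R]_4) : Prop :=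
  forall i (k : 'I_4), smooth_on (U i) (fun x => F (phi i x) 0 k).

Definition immersion {R : realType} {M : topologicalType} {I : Type}
    (U : I -> set (R * R)) (phi : I -> R * R -> M) (alpha : M -> 'rV[R]_4) : Prop :=
  smooth_map U phi alpha /\
  forall i x (a b : R), U i x ->
    a *: vpu (alpha \o phi i) x + b *: vpv (alpha \o phi i) x = 0 -> a = 0 /\ b = 0.

Definition ffE {R : realType} (a : R * R -> 'rV[R]_4) x := dot4 (vpu a x) (vpu a x).
Definition ffF {R : realType} (a : R * R -> 'rV[R]_4) x := dot4 (vpu a x) (vpv a x).
Definition ffG {R : realType} (a : R * R -> 'rV[R]_4) x := dot4 (vpv a x) (vpv a x).

Definition sfe {R : realType} (a : R * R -> 'rV[R]_4) (n : 'rV[R]_4) x :=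
  dot4 (vpu (vpu a) x) n.
Definition sff {R : realType} (a : R * R -> 'rV[R]_4) (n : 'rV[R]_4) x :=
  dot4 (vpv (vpu a) x) n.
Definition sfg {R : realType} (a : R * R -> 'rV[R]_4) (n : 'rV[R]_4) x :=
  dot4 (vpv (vpv a) x) n.

(* Gaussian curvature at x computed with an orthonormal normal frame {n1,n2} *)
Definition gaussK {R : realType} (a : R * R -> 'rV[R]_4) (n1 n2 : 'rV[R]_4) x : R :=
  (sfe a n1 x * sfg a n1 x - sff a n1 x ^+ 2 + sfe a n2 x * sfg a n2 x - sff a n2 x ^+ 2)
  / (ffE a x * ffG a x - ffF a x ^+ 2).

Definition unit_normal_at {R : realType} (a : R * R -> 'rV[R]_4) (n : 'rV[R]_4) x : Prop :=
  dot4 n n = 1 /\ dot4 n (vpu a x) = 0 /\ dot4 n (vpv a x) = 0.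

(* Main.v *)
Require Import Defs.
From HB Require Import structures.
From mathcomp Require Import all_boot all_order all_algebra.
From mathcomp Require Import all_classical all_reals all_analysis.
Import Order.TTheory GRing.Theory Num.Theory.
Import numFieldNormedType.Exports.
Local Open Scope classical_set_scope.
Local Open Scope ring_scope.

From mathcomp Require Import ring lra.
Set Implicit Arguments. Unset Strict Implicit. Unset Printing Implicit Defensive.

Section Calc.
Variable R : realType.
Implicit Types (f g : R -> R) (t : R).

Lemma d1D f g t : derivable f t 1 -> derivable g t 1 ->
  derive1 (fun s => f s + g s) t = derive1 f t + derive1 g t.
Proof. by move=> df dg; rewrite !derive1E; apply: (deriveD df dg). Qed.

Lemma d1B f g t : derivable f t 1 -> derivable g t 1 ->
  derive1 (fun s => f s - g s) t = derive1 f t - derive1 g t.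
Proof. by move=> df dg; rewrite !derive1E; apply: (deriveB df dg). Qed.

Lemma d1M f g t : derivable f t 1 -> derivable g t 1 ->
  derive1 (fun s => f s * g s) t = f t * derive1 g t + g t * derive1 f t.
Proof. by move=> df dg; rewrite !derive1E; apply: (deriveM df dg). Qed.

Lemma dvD f g t : derivable f t 1 -> derivable g t 1 ->
  derivable (fun s => f s + g s) t 1.
Proof. by move=> df dg; apply: (derivableD df dg). Qed.

Lemma dvM f g t : derivable f t 1 -> derivable g t 1 ->
  derivable (fun s => f s * g s) t 1.
Proof. by move=> df dg; apply: (derivableM df dg). Qed.

Lemma dvB f g t : derivable f t 1 -> derivable g t 1 ->
  derivable (fun s => f s - g s) t 1.
Proof. by move=> df dg; apply: (derivableB df dg). Qed.

Lemma mvt g a b : a < b -> (forall s, a <= s <= b -> derivable g s 1) ->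
  exists2 c, a < c < b & g b - g a = derive1 g c * (b - a).
Proof.
move=> ab dg.
have h1 : forall s, s \in `]a, b[%R -> is_derive s 1 g (derive1 g s).
  move=> s; rewrite in_itv /= => /andP[h1 h2].
  rewrite derive1E; apply: derivableP; apply: dg.
  by rewrite !ltW.
have h2 : {within `[a, b], continuous g}.
  apply: derivable_within_continuous => s; rewrite in_itv /=.
  exact: dg.
have [c cab E] := @MVT R g (derive1 g) a b ab h1 h2.
by exists c => //; move: cab; rewrite in_itv.
Qed.

End Calc.

Section T.
Variable R : realType.
Lemma open_box (U : set (R * R)) x : open U -> U x ->
  exists2 e : R, 0 < e & forall y : R * R, `|x.1 - y.1| < e -> `|x.2 - y.2| < e -> U y.
Proof.
move=> oU Ux.
have : nbhs x U by apply: open_nbhs_nbhs; split.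
move/nbhs_ballP => [e e0 sub]; exists e => // y h1 h2; apply: sub.
by split.
Qed.
Lemma cont_box (g : R * R -> R) x : {for x, continuous g} ->
  forall eps, 0 < eps -> exists2 d : R, 0 < d & forall y : R * R,
   `|x.1 - y.1| < d -> `|x.2 - y.2| < d -> `|g x - g y| < eps.
Proof.
move=> cg eps e0.
have H : \forall t \near x, `|g x - g t| < eps.
  exact: (@cvgr_dist_lt _ _ _ _ _ g (g x) cg _ e0).
case/nbhs_ballP: H => e he sub; exists e => // y h1 h2.
by apply: (sub y); split.
Qed.

Lemma tri (A B X : R) : `|A - X| < `|A - B| / 2 -> `|B - X| < `|A - B| / 2 -> False.
Proof.
move=> h1 h2.
have := ler_normD (A - X) (X - B).
have -> : A - X + (X - B) = A - B by rewrite addrA subrK.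
rewrite (distrC X B) => h3.
have : `|A - B| < `|A - B| / 2 + `|A - B| / 2 by apply: le_lt_trans h3 _; apply: ltrD.
by rewrite -splitr ltxx.
Qed.

Lemma mul2_cancel (X Y h : R) : h * h != 0 -> X * h * h = Y * h * h -> X = Y.
Proof. by move=> hh E; apply: (mulIf hh); rewrite !mulrA. Qed.

Lemma smooth0 (U : set (R*R)) f z : smooth_on U f -> U z ->
  derivable (fun t => f (t, z.2)) z.1 1 /\ derivable (fun t => f (z.1, t)) z.2 1.
Proof. move=> S Uz; have [H1 H2 _] := S [::] z Uz; split; [exact: H1|exact: H2]. Qed.

Lemma schwarz (U : set (R*R)) f x : open U -> smooth_on U f -> U x ->
  pv (pu f) x = pu (pv f) x.
Proof.
move=> oU S Ux.
set A := pv (pu f) x; set B := pu (pv f) x.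
apply/eqP; apply/negPn/negP => AB.
have e0 : 0 < `|A - B| / 2 by rewrite divr_gt0 // normr_gt0 subr_eq0.
have [eU eU0 hU] := open_box oU Ux.
have cA : {for x, continuous (pv (pu f))} by have [] := S [:: true; false] x Ux.
have cB : {for x, continuous (pu (pv f))} by have [] := S [:: false; true] x Ux.
have [d1 d10 h1] := cont_box cA e0.
have [d2 d20 h2] := cont_box cB e0.
have [h h0 hlt] : exists2 h : R, 0 < h & h < Num.min eU (Num.min d1 d2).
  exists (Num.min eU (Num.min d1 d2) / 2); first by rewrite divr_gt0 // !lt_min eU0 d10 d20.
  by rewrite ltr_pdivrMr // ltr_pMr ?ltr1n // !lt_min eU0 d10 d20.
move: hlt; rewrite !lt_min => /and3P[hU' hd1 hd2].
set x1 := x.1; set x2 := x.2.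
have inS : forall s t, x1 <= s <= x1 + h -> x2 <= t <= x2 + h ->
   [/\ U (s, t), `|A - pv (pu f) (s, t)| < `|A - B| / 2 &
       `|B - pu (pv f) (s, t)| < `|A - B| / 2].
  move=> s t /andP[s1 s2] /andP[t1 t2].
  have hs : `|x1 - s| <= h.
    by rewrite distrC ger0_norm ?subr_ge0 // lerBlDl.
  have ht : `|x2 - t| <= h.
    by rewrite distrC ger0_norm ?subr_ge0 // lerBlDl.
  split.
  - by apply: hU => /=; [apply: le_lt_trans hs hU'|apply: le_lt_trans ht hU'].
  - by apply: (h1 (s, t)) => /=; [apply: le_lt_trans hs hd1|apply: le_lt_trans ht hd1].
  - by apply: (h2 (s, t)) => /=; [apply: le_lt_trans hs hd2|apply: le_lt_trans ht hd2].
have xs : x1 < x1 + h by rewrite ltrDl.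
have xt : x2 < x2 + h by rewrite ltrDl.
set D := f (x1 + h, x2 + h) - f (x1 + h, x2) - f (x1, x2 + h) + f (x1, x2).
have bs1 : x1 <= x1 + h <= x1 + h by rewrite lexx ltW.
have bs0 : x1 <= x1 <= x1 + h by rewrite lexx ltW.
have bt1 : x2 <= x2 + h <= x2 + h by rewrite lexx ltW.
have bt0 : x2 <= x2 <= x2 + h by rewrite lexx ltW.
have Sd : forall ds s t, x1 <= s <= x1 + h -> x2 <= t <= x2 + h ->
   derivable (fun r => pd ds f (r, t)) s 1 /\ derivable (fun r => pd ds f (s, r)) t 1.
  move=> ds s t hs ht; have [Ust _ _] := inS s t hs ht.
  have [H1 H2 _] := S ds (s, t) Ust; split; [exact: H1|exact: H2].
have [c /andP[c1 c2] Ec] := @mvt R (fun s => f (s, x2 + h) - f (s, x2)) x1 (x1 + h) xs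
  (fun s hs => dvB (Sd [::] s _ hs bt1).1 (Sd [::] s _ hs bt0).1).
have cb : x1 <= c <= x1 + h by rewrite !ltW.
rewrite d1B in Ec; [|exact: (Sd [::] c _ cb bt1).1|exact: (Sd [::] c _ cb bt0).1].
have [d /andP[dd1 dd2] Ed] := @mvt R (fun t => pu f (c, t)) x2 (x2 + h) xt
  (fun t ht => (Sd [:: false] c t cb ht).2).
have db : x2 <= d <= x2 + h by rewrite !ltW.
have E1 : D = pv (pu f) (c, d) * h * h.
  rewrite /D; move: Ec Ed; rewrite /pu /pv /= => Ec Ed.
  have hh1 : x1 + h - x1 = h by rewrite addrC addKr.
  have hh2 : x2 + h - x2 = h by rewrite addrC addKr.
  rewrite hh1 in Ec; rewrite hh2 in Ed; rewrite Ed in Ec.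
  apply: eq_trans _ (eq_trans Ec _); [ring|exact: erefl].
have [d' /andP[dd1' dd2'] Ed'] := @mvt R (fun t => f (x1 + h, t) - f (x1, t)) x2 (x2 + h) xt
  (fun t ht => dvB (Sd [::] _ t bs1 ht).2 (Sd [::] _ t bs0 ht).2).
have db' : x2 <= d' <= x2 + h by rewrite !ltW.
rewrite d1B in Ed'; [|exact: (Sd [::] _ d' bs1 db').2|exact: (Sd [::] _ d' bs0 db').2].
have [c' /andP[cc1' cc2'] Ec'] := @mvt R (fun s => pv f (s, d')) x1 (x1 + h) xs
  (fun s hs => (Sd [:: true] s d' hs db').1).
have cb' : x1 <= c' <= x1 + h by rewrite !ltW.
have E2 : D = pu (pv f) (c', d') * h * h.
  rewrite /D; move: Ec' Ed'; rewrite /pu /pv /= => Ec' Ed'.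
  have hh1 : x1 + h - x1 = h by rewrite addrC addKr.
  have hh2 : x2 + h - x2 = h by rewrite addrC addKr.
  rewrite hh1 in Ec'; rewrite hh2 in Ed'; rewrite Ec' in Ed'.
  apply: eq_trans _ (eq_trans Ed' _); [ring|exact: erefl].
have hh0 : h * h != 0 by rewrite mulf_neq0 // gt_eqF.
have XY : pv (pu f) (c, d) = pu (pv f) (c', d').
  exact: (mul2_cancel hh0 (etrans (esym E1) E2)).
have [_ hA _] := inS c d cb db.
have [_ _ hB] := inS c' d' cb' db'.
rewrite XY in hA.
exact: (tri hA hB).
Qed.

End T.

Section T.
Variable R : realType.

Lemma d1_sum n (F : 'I_n -> R -> R) t : (forall k, derivable (F k) t 1) ->
  derivable (fun s => \sum_(k < n) F k s) t 1 /\
  derive1 (fun s => \sum_(k < n) F k s) t = \sum_(k < n) derive1 (F k) t.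
Proof.
elim: n F => [|n IH] F dF.
  have -> : (fun s => \sum_(k < 0) F k s) = cst 0.
    by apply: funext => s; rewrite big_ord0.
  rewrite big_ord0 derive1_cst; split => //; exact: derivable_cst.
have -> : (fun s => \sum_(k < n.+1) F k s) =
   (fun s => (fun s => \sum_(k < n) F (widen_ord (leqnSn n) k) s) s + F ord_max s).
  by apply: funext => s; rewrite big_ord_recr.
have [d1 e1] := IH (fun k => F (widen_ord (leqnSn n) k)) (fun k => dF _).
split; first exact: (dvD d1 (dF _)).
rewrite (d1D d1 (dF _)) e1.
by rewrite [in RHS]big_ord_recr.
Qed.

Lemma d1_dot (A B : R -> 'rV[R]_4) t :
  (forall k, derivable (fun s => A s 0 k) t 1) ->
  (forall k, derivable (fun s => B s 0 k) t 1) ->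
  derivable (fun s => dot4 (A s) (B s)) t 1 /\
  derive1 (fun s => dot4 (A s) (B s)) t =
    dot4 (\row_k derive1 (fun s => A s 0 k) t) (B t) +
    dot4 (A t) (\row_k derive1 (fun s => B s 0 k) t).
Proof.
move=> dA dB.
have dM : forall k, derivable (fun s => A s 0 k * B s 0 k) t 1.
  by move=> k; apply: dvM.
have [H1 H2] := @d1_sum 4 (fun (k : 'I_4) (s : R) => A s 0 k * B s 0 k) t dM.
split; first exact: H1.
rewrite /dot4 H2 -big_split /=; apply: eq_bigr => k _.
rewrite (d1M (dA k) (dB k)) !mxE addrC; congr (_ + _); exact: mulrC.
Qed.

End T.

Section T.
Variable R : realType.
Implicit Types (u v w : 'rV[R]_4).

Lemma dot4C u v : dot4 u v = dot4 v u.
Proof. by rewrite /dot4; apply: eq_bigr => k _; rewrite mulrC. Qed.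
Lemma dot4Dl u v w : dot4 (u + v) w = dot4 u w + dot4 v w.
Proof. by rewrite /dot4 -big_split; apply: eq_bigr => k _; rewrite !mxE mulrDl. Qed.
Lemma dot4Zl (c : R) u v : dot4 (c *: u) v = c * dot4 u v.
Proof. by rewrite /dot4 mulr_sumr; apply: eq_bigr => k _; rewrite !mxE mulrA. Qed.
Lemma dot4Nl u v : dot4 (- u) v = - dot4 u v.
Proof. by rewrite -scaleN1r dot4Zl mulN1r. Qed.
Lemma dot4Bl u v w : dot4 (u - v) w = dot4 u w - dot4 v w.
Proof. by rewrite dot4Dl dot4Nl. Qed.
Lemma dot40l v : dot4 0 v = 0.
Proof. by rewrite -(scale0r 0) dot4Zl mul0r. Qed.
Lemma dot4Dr u v w : dot4 w (u + v) = dot4 w u + dot4 w v.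
Proof. by rewrite dot4C dot4Dl !(dot4C w). Qed.
Lemma dot4Zr (c : R) u v : dot4 v (c *: u) = c * dot4 v u.
Proof. by rewrite dot4C dot4Zl dot4C. Qed.
Lemma dot4Br u v w : dot4 w (u - v) = dot4 w u - dot4 w v.
Proof. by rewrite dot4C dot4Bl !(dot4C w). Qed.
Lemma dot40r v : dot4 v 0 = 0.
Proof. by rewrite dot4C dot40l. Qed.

Lemma dot4_ge0 v : 0 <= dot4 v v.
Proof. by apply: sumr_ge0 => k _; rewrite -expr2 sqr_ge0. Qed.

Lemma dot4_eq0 v : dot4 v v = 0 -> v = 0.
Proof.
move=> /eqP; rewrite /dot4 psumr_eq0 => [/allP H|k _]; last by rewrite -expr2 sqr_ge0.
apply/rowP => k; rewrite mxE.
have := H k (mem_index_enum k); rewrite /= mulf_eq0 orbb.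
by move/eqP.
Qed.

Lemma orth4 (V : 'I_4 -> 'rV[R]_4) r :
  (forall i j, i != j -> dot4 (V i) (V j) = 0) ->
  (forall i, dot4 (V i) (V i) != 0) ->
  (forall i, dot4 r (V i) = 0) -> r = 0.
Proof.
move=> Vo Vn rV.
pose M : 'M[R]_4 := \matrix_(i, j) V i 0 j.
pose N : 'M[R]_4 := \matrix_(i, j) (V i 0 j / dot4 (V i) (V i)).
have NM : N *m M^T = 1%:M.
  apply/matrixP => i j; rewrite !mxE.
  under eq_bigr do rewrite !mxE.
  have -> : \sum_(k < 4) V i 0 k / dot4 (V i) (V i) * V j 0 k =
            dot4 (V i) (V j) / dot4 (V i) (V i).
    rewrite /dot4 mulr_suml; apply: eq_bigr => k _; ring.
  case: (eqVneq i j) => [<-|ij]; first by rewrite divff.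
  by rewrite Vo // mul0r.
have MN : M *m N^T = 1%:M by rewrite -(trmxK M) -trmx_mul NM trmx1.
have NM' := mulmx1C MN.
have Mr : M *m r^T = 0.
  apply/matrixP => i j; rewrite !mxE (ord1 j).
  rewrite -[RHS](rV i) dot4C /dot4; apply: eq_bigr => k _; by rewrite !mxE.
have : r^T = 0 by rewrite -[r^T]mul1mx -NM' -mulmxA Mr mulmx0.
by move/(congr1 trmx); rewrite trmxK trmx0.
Qed.


Lemma decomp (au av n Z Y : 'rV[R]_4) :
  dot4 au au != 0 ->
  dot4 (dot4 au au *: av - dot4 au av *: au) (dot4 au au *: av - dot4 au av *: au) != 0 ->
  dot4 n n = 1 -> dot4 n au = 0 -> dot4 n av = 0 -> Z != 0 ->
  dot4 Z au = 0 -> dot4 Z av = 0 -> dot4 Z n = 0 ->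
  dot4 Y au = 0 -> dot4 Y av = 0 -> dot4 Y n = 0 ->
  Y = (dot4 Y Z / dot4 Z Z) *: Z.
Proof.
set E := dot4 au au; set F := dot4 au av; set w := E *: av - F *: au.
move=> E0 w0 nn nau nav Z0 Zau Zav Zn Yau Yav Yn.
have ZZ : dot4 Z Z != 0 by apply: contra Z0 => /eqP /dot4_eq0 ->.
set c := dot4 Y Z / dot4 Z Z.
apply/eqP; rewrite -subr_eq0; apply/eqP.
have auw : dot4 au w = 0 by rewrite /w dot4Br !dot4Zr -/E -/F mulrC subrr.
have wau : dot4 w au = 0 by rewrite dot4C.
have aun : dot4 au n = 0 by rewrite dot4C.
have auZ : dot4 au Z = 0 by rewrite dot4C.
have wn : dot4 w n = 0 by rewrite /w dot4Bl !dot4Zl -!(dot4C n) nau nav !mulr0 subrr.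
have nw : dot4 n w = 0 by rewrite dot4C.
have wZ : dot4 w Z = 0 by rewrite /w dot4Bl !dot4Zl -!(dot4C Z) Zau Zav !mulr0 subrr.
have Zw : dot4 Z w = 0 by rewrite dot4C.
have nZ : dot4 n Z = 0 by rewrite dot4C.
pose V := fun i : 'I_4 => if val i == 0%N then au else if val i == 1%N then w
                         else if val i == 2%N then n else Z.
apply: (@orth4 V).
- move=> [[|[|[|[|i]]]] Hi] [[|[|[|[|j]]]] Hj] //= _; by [].
- move=> [[|[|[|[|i]]]] Hi] //=; by rewrite ?nn ?oner_neq0.
- move=> [[|[|[|[|i]]]] Hi] //=.
  + by rewrite dot4Bl dot4Zl Yau Zau mulr0 subrr.
  + by rewrite dot4Bl dot4Zl Zw mulr0 subr0 /w dot4Br !dot4Zr Yau Yav !mulr0 subrr.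
  + by rewrite dot4Bl dot4Zl Yn Zn mulr0 subrr.
  + by rewrite dot4Bl dot4Zl /c mulfVK // subrr.
Qed.

Lemma key (lam : R) (au av n P Q auu auv avv : 'rV[R]_4) :
  (forall c1 c2 : R, c1 *: au + c2 *: av = 0 -> c1 = 0 /\ c2 = 0) ->
  dot4 n n = 1 -> dot4 n au = 0 -> dot4 n av = 0 ->
  dot4 auu n = lam * dot4 au au -> dot4 auv n = lam * dot4 au av ->
  dot4 avv n = lam * dot4 av av ->
  dot4 P au = 0 -> dot4 P av = 0 -> dot4 P n = 0 ->
  dot4 Q au = 0 -> dot4 Q av = 0 -> dot4 Q n = 0 ->
  dot4 P auv = dot4 Q auu -> dot4 P avv = dot4 Q auv ->
  (forall n2, dot4 n2 n2 = 1 -> dot4 n2 au = 0 -> dot4 n2 av = 0 -> dot4 n n2 = 0 ->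
     (dot4 auu n * dot4 avv n - dot4 auv n ^+ 2 + dot4 auu n2 * dot4 avv n2
        - dot4 auv n2 ^+ 2)
     / (dot4 au au * dot4 av av - dot4 au av ^+ 2) != lam ^+ 2) ->
  P = 0 /\ Q = 0.
Proof.
move=> ind nn nau nav e1 f1 g1 Pau Pav Pn Qau Qav Qn R1 R2 HK.
set E := dot4 au au; set F := dot4 au av; set G := dot4 av av.
have E0 : E != 0.
  apply/eqP => /dot4_eq0 au0.
  have [h _] : (1 : R) = 0 /\ (0 : R) = 0 by apply: ind; rewrite au0 scaler0 scale0r addr0.
  by move: (@oner_neq0 R); rewrite h eqxx.
set w := E *: av - F *: au.
have ww : dot4 w w = E * (E * G - F ^+ 2).
  rewrite /w !dot4Bl !dot4Br !dot4Zl !dot4Zr (dot4C av au) -/E -/F -/G; ring.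
have D0 : E * G - F ^+ 2 != 0.
  apply/eqP => D.
  have w0 : w = 0 by apply: dot4_eq0; rewrite ww D mulr0.
  have [_ h] : - F = 0 /\ E = 0 by apply: ind; rewrite scaleNr addrC; exact: w0.
  by move: E0; rewrite h eqxx.
have wn0 : dot4 w w != 0 by rewrite ww mulf_neq0.
have final : forall Z, Z != 0 -> dot4 Z au = 0 -> dot4 Z av = 0 -> dot4 Z n = 0 ->
    dot4 auu Z * dot4 avv Z = dot4 auv Z ^+ 2 -> False.
  move=> Z Z0 Zau Zav Zn eg.
  have ZZ : 0 < dot4 Z Z.
    rewrite lt_neqAle dot4_ge0 andbT eq_sym.
    by apply: contra Z0 => /eqP /dot4_eq0 ->.
  set s := Num.sqrt (dot4 Z Z).
  have s0 : 0 < s by rewrite sqrtr_gt0.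
  have ss : s ^+ 2 = dot4 Z Z by rewrite sqr_sqrtr // ltW.
  have := HK (s^-1 *: Z).
  rewrite !dot4Zl !dot4Zr Zau Zav (dot4C n Z) Zn !mulr0 e1 f1 g1 -/E -/F -/G.
  have -> : s^-1 * (s^-1 * dot4 Z Z) = 1.
    by rewrite -ss expr2 mulKf ?gt_eqF // mulVf // gt_eqF.
  move=> /(_ erefl erefl erefl erefl) /negP; apply.
  set e' := dot4 auu Z; set f' := dot4 auv Z; set g' := dot4 avv Z.
  have -> : lam * E * (lam * G) - (lam * F) ^+ 2 + s^-1 * e' * (s^-1 * g') - (s^-1 * f') ^+ 2
     = lam ^+ 2 * (E * G - F ^+ 2) + s^-1 ^+ 2 * (e' * g' - f' ^+ 2) by ring.
  by rewrite eg subrr mulr0 addr0 mulfK.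
have Zorth := decomp (Y := Q) E0 wn0 nn nau nav.
case: (eqVneq P 0) => [P0|P0].
  split => //; case: (eqVneq Q 0) => // Q0; exfalso.
  apply: (final Q Q0 Qau Qav Qn).
  have e0 : dot4 auu Q = 0 by rewrite dot4C -R1 P0 dot40l.
  have f0 : dot4 auv Q = 0 by rewrite dot4C -R2 P0 dot40l.
  by rewrite e0 f0 mul0r expr0n.
exfalso; apply: (final P P0 Pau Pav Pn).
have HQ := decomp (Y := Q) E0 wn0 nn nau nav P0 Pau Pav Pn Qau Qav Qn.
set q := dot4 Q P / dot4 P P in HQ.
rewrite HQ !dot4Zl in R1 R2.
rewrite !(dot4C _ P) R2 R1; ring.
Qed.

End T.

Section Gen.
Variable R : realType.

Lemma dv_eq (g h : R -> R) t : (forall s, g s = h s) -> derivable h t 1 -> derivable g t 1.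
Proof. by move=> e; have -> : g = h by apply: funext. Qed.

Lemma d1Z (c : R) (g : R -> R) t : derivable g t 1 ->
  derive1 (fun s => c * g s) t = c * derive1 g t.
Proof.
move=> dg; rewrite !derive1E.
have -> : (fun s => c * g s) = c *: g by apply: funext.
exact: (deriveZ c dg).
Qed.

Lemma dvZ (c : R) (g : R -> R) t : derivable g t 1 -> derivable (fun s => c * g s) t 1.
Proof. by move=> dg; refine (dv_eq _ (derivableZ (k := c) dg)). Qed.

Definition C1 (F : R * R -> 'rV[R]_4) (y : R * R) := forall k,
  derivable (fun s => F (s, y.2) 0 k) y.1 1 /\ derivable (fun s => F (y.1, s) 0 k) y.2 1.

Lemma C1_smooth (U : set (R * R)) (F : R * R -> 'rV[R]_4) ds y : (forall k, smooth_on U (fun z => F z 0 k)) -> U y ->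
  C1 (fun z => \row_k pd ds (fun w => F w 0 k) z) y.
Proof.
move=> S Uy k; have [H1 H2 _] := S k ds y Uy; split.
  by refine (dv_eq _ H1) => s; rewrite mxE.
by refine (dv_eq _ H2) => s; rewrite mxE.
Qed.

Lemma C1_0 (U : set (R * R)) (F : R * R -> 'rV[R]_4) y : (forall k, smooth_on U (fun z => F z 0 k)) -> U y -> C1 F y.
Proof.
move=> S Uy k; have [H1 H2 _] := S k [::] y Uy; split; [exact: H1|exact: H2].
Qed.

Lemma C1_lin (F G : R * R -> 'rV[R]_4) (c : R) y : C1 F y -> C1 G y -> C1 (fun z => F z + c *: G z) y.
Proof.
move=> dF dG k; have [F1 F2] := dF k; have [G1 G2] := dG k; split.
  by refine (dv_eq _ (dvD F1 (dvZ (c := c) G1))) => s; rewrite !mxE.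
by refine (dv_eq _ (dvD F2 (dvZ (c := c) G2))) => s; rewrite !mxE.
Qed.

Lemma pu_dot (A B : R * R -> 'rV[R]_4) y : C1 A y -> C1 B y ->
  pu (fun z => dot4 (A z) (B z)) y = dot4 (vpu A y) (B y) + dot4 (A y) (vpu B y).
Proof.
case: y => y1 y2 dA dB.
exact: (d1_dot (A := fun s => A (s, y2)) (B := fun s => B (s, y2)) (fun k => (dA k).1) (fun k => (dB k).1)).2.
Qed.

Lemma pv_dot (A B : R * R -> 'rV[R]_4) y : C1 A y -> C1 B y ->
  pv (fun z => dot4 (A z) (B z)) y = dot4 (vpv A y) (B y) + dot4 (A y) (vpv B y).
Proof.
case: y => y1 y2 dA dB.
exact: (d1_dot (A := fun s => A (y1, s)) (B := fun s => B (y1, s)) (fun k => (dA k).2) (fun k => (dB k).2)).2.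
Qed.

Lemma vpu_lin (F G : R * R -> 'rV[R]_4) (c : R) y : C1 F y -> C1 G y ->
  vpu (fun z => F z + c *: G z) y = vpu F y + c *: vpu G y.
Proof.
move=> dF dG; apply/rowP => k; rewrite !mxE.
have -> : (fun w => (F w + c *: G w) 0 k) = (fun w => F w 0 k + c * G w 0 k).
  by apply: funext => w; rewrite !mxE.
rewrite /pu (d1D (dF k).1 (dvZ (c := c) (dG k).1)).
by rewrite (d1Z c (dG k).1).
Qed.

Lemma vpv_lin (F G : R * R -> 'rV[R]_4) (c : R) y : C1 F y -> C1 G y ->
  vpv (fun z => F z + c *: G z) y = vpv F y + c *: vpv G y.
Proof.
move=> dF dG; apply/rowP => k; rewrite !mxE.
have -> : (fun w => (F w + c *: G w) 0 k) = (fun w => F w 0 k + c * G w 0 k).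
  by apply: funext => w; rewrite !mxE.
rewrite /pv (d1D (dF k).2 (dvZ (c := c) (dG k).2)).
by rewrite (d1Z c (dG k).2).
Qed.

Lemma loc0u (U : set (R * R)) (g : R * R -> R) c y : open U -> U y -> (forall z, U z -> g z = c) -> pu g y = 0.
Proof.
move=> oU Uy hg.
have [e e0 hU] := open_box oU Uy.
rewrite /pu derive1E -(derive_cst c y.1 1); apply: near_eq_derive.
apply/nbhs_ballP; exists e => // s /= hs.
apply: hg; apply: hU => //=; by rewrite subrr normr0.
Qed.

Lemma loc0v (U : set (R * R)) (g : R * R -> R) c y : open U -> U y -> (forall z, U z -> g z = c) -> pv g y = 0.
Proof.
move=> oU Uy hg.
have [e e0 hU] := open_box oU Uy.
rewrite /pv derive1E -(derive_cst c y.2 1); apply: near_eq_derive.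
apply/nbhs_ballP; exists e => // s /= hs.
apply: hg; apply: hU => //=; by rewrite subrr normr0.
Qed.

Lemma vschwarz (U : set (R * R)) (F : R * R -> 'rV[R]_4) y : open U -> (forall k, smooth_on U (fun z => F z 0 k)) -> U y ->
  vpv (vpu F) y = vpu (vpv F) y.
Proof.
move=> oU S Uy; apply/rowP => k.
rewrite [LHS]mxE.
rewrite [RHS]mxE.
have -> : (fun w => vpu F w 0 k) = pu (fun w => F w 0 k) by apply: funext => w; rewrite mxE.
have -> : (fun w => vpv F w 0 k) = pv (fun w => F w 0 k) by apply: funext => w; rewrite mxE.
exact: schwarz oU (S k) Uy.
Qed.

End Gen.

Section Alg.
Variable R : realType.
Lemma fo_alg (lam : R) (n nu nv au av auu auv avv : 'rV[R]_4) :
 dot4 nu n + dot4 n nu = 0 -> dot4 nv n + dot4 n nv = 0 ->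
 dot4 nu au + dot4 n auu = 0 -> dot4 nv au + dot4 n auv = 0 ->
 dot4 nu av + dot4 n auv = 0 -> dot4 nv av + dot4 n avv = 0 ->
 dot4 n au = 0 -> dot4 n av = 0 ->
 dot4 auu n = lam * dot4 au au -> dot4 auv n = lam * dot4 au av ->
 dot4 avv n = lam * dot4 av av ->
 [/\ dot4 (nu + lam *: au) au = 0, dot4 (nu + lam *: au) av = 0 &
     dot4 (nu + lam *: au) n = 0] /\ [/\ dot4 (nv + lam *: av) au = 0,
     dot4 (nv + lam *: av) av = 0 & dot4 (nv + lam *: av) n = 0].
Proof.
move=> h1 h2 h3 h4 h5 h6 h7 h8 h9 h10 h11.
rewrite !dot4Dl !dot4Zl.
rewrite (dot4C n nu) in h1; rewrite (dot4C n nv) in h2.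
rewrite (dot4C n auu) h9 in h3; rewrite (dot4C n auv) h10 in h4 h5.
rewrite (dot4C n avv) h11 in h6.
rewrite (dot4C au n) (dot4C av n) h7 h8 (dot4C av au).
by split; split; lra.
Qed.

Lemma so_alg (lam : R) (P Q nuv nvu au av auu auv avu avv : 'rV[R]_4) :
  nuv = nvu -> auv = avu ->
  dot4 (nuv + lam *: auv) au + dot4 P auv = 0 ->
  dot4 (nvu + lam *: avu) au + dot4 Q auu = 0 ->
  dot4 (nuv + lam *: auv) av + dot4 P avv = 0 ->
  dot4 (nvu + lam *: avu) av + dot4 Q avu = 0 ->
  dot4 P auv = dot4 Q auu /\ dot4 P avv = dot4 Q auv.
Proof.
move=> <- <- h1 h2 h3 h4; split; lra.
Qed.
End Alg.

Section Local.
Variables (R : realType) (U : set (R * R)) (a n : R * R -> 'rV[R]_4) (lam : R).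
Hypothesis oU : open U.
Hypothesis Sa : forall k, smooth_on U (fun y => a y 0 k).
Hypothesis Sn : forall k, smooth_on U (fun y => n y 0 k).
Hypothesis Hn : forall y, U y -> unit_normal_at a (n y) y.
Hypothesis HII : forall y, U y ->
  [/\ sfe a (n y) y = lam * ffE a y, sff a (n y) y = lam * ffF a y &
      sfg a (n y) y = lam * ffG a y].

Lemma fo z : U z ->
 [/\ dot4 (vpu n z + lam *: vpu a z) (vpu a z) = 0,
     dot4 (vpu n z + lam *: vpu a z) (vpv a z) = 0 &
     dot4 (vpu n z + lam *: vpu a z) (n z) = 0] /\
 [/\ dot4 (vpv n z + lam *: vpv a z) (vpu a z) = 0,
     dot4 (vpv n z + lam *: vpv a z) (vpv a z) = 0 &
     dot4 (vpv n z + lam *: vpv a z) (n z) = 0].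
Proof.
move=> Uz.
have Cn : C1 n z := C1_0 Sn Uz.
have Cau : C1 (vpu a) z := C1_smooth [:: false] Sa Uz.
have Cav : C1 (vpv a) z := C1_smooth [:: true] Sa Uz.
have [nn [nau nav]] := Hn Uz.
have [e1 f1 g1] := HII Uz.
have A1 : pu (fun z => dot4 (n z) (n z)) z = 0.
  by apply: (loc0u oU Uz) => w Uw; have [h _] := Hn Uw; exact: h.
have A2 : pv (fun z => dot4 (n z) (n z)) z = 0.
  by apply: (loc0v oU Uz) => w Uw; have [h _] := Hn Uw; exact: h.
have B1 : pu (fun z => dot4 (n z) (vpu a z)) z = 0.
  by apply: (loc0u oU Uz) => w Uw; have [_ [h1 h2]] := Hn Uw; first [exact: h1 | exact: h2].
have B2 : pv (fun z => dot4 (n z) (vpu a z)) z = 0.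
  by apply: (loc0v oU Uz) => w Uw; have [_ [h1 h2]] := Hn Uw; first [exact: h1 | exact: h2].
have B3 : pu (fun z => dot4 (n z) (vpv a z)) z = 0.
  by apply: (loc0u oU Uz) => w Uw; have [_ [h1 h2]] := Hn Uw; first [exact: h1 | exact: h2].
have B4 : pv (fun z => dot4 (n z) (vpv a z)) z = 0.
  by apply: (loc0v oU Uz) => w Uw; have [_ [h1 h2]] := Hn Uw; first [exact: h1 | exact: h2].
rewrite (pu_dot Cn Cn) in A1.
rewrite (pv_dot Cn Cn) in A2.
rewrite (pu_dot Cn Cau) in B1.
rewrite (pv_dot Cn Cau) in B2.
rewrite (pu_dot Cn Cav) -(vschwarz oU Sa Uz) in B3.
rewrite (pv_dot Cn Cav) in B4.
exact: (fo_alg A1 A2 B1 B2 B3 B4 nau nav e1 f1 g1).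
Qed.

Lemma main_local y : U y ->
  (forall c1 c2 : R, c1 *: vpu a y + c2 *: vpv a y = 0 -> c1 = 0 /\ c2 = 0) ->
  (forall n2, unit_normal_at a n2 y -> dot4 (n y) n2 = 0 ->
     gaussK a (n y) n2 y != lam ^+ 2) ->
  vpu n y + lam *: vpu a y = 0 /\ vpv n y + lam *: vpv a y = 0.
Proof.
move=> Uy ind HK.
have Cn : C1 n y := C1_0 Sn Uy.
have Cau : C1 (vpu a) y := C1_smooth [:: false] Sa Uy.
have Cav : C1 (vpv a) y := C1_smooth [:: true] Sa Uy.
have Cnu : C1 (vpu n) y := C1_smooth [:: false] Sn Uy.
have Cnv : C1 (vpv n) y := C1_smooth [:: true] Sn Uy.
have CP : C1 (fun z => vpu n z + lam *: vpu a z) y := C1_lin lam Cnu Cau.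
have CQ : C1 (fun z => vpv n z + lam *: vpv a z) y := C1_lin lam Cnv Cav.
have G1 : pv (fun z => dot4 (vpu n z + lam *: vpu a z) (vpu a z)) y = 0.
  by apply: (loc0v oU Uy) => w Uw; have [[h _ _] _] := fo Uw; exact: h.
have G2 : pu (fun z => dot4 (vpv n z + lam *: vpv a z) (vpu a z)) y = 0.
  by apply: (loc0u oU Uy) => w Uw; have [_ [h _ _]] := fo Uw; exact: h.
have G3 : pv (fun z => dot4 (vpu n z + lam *: vpu a z) (vpv a z)) y = 0.
  by apply: (loc0v oU Uy) => w Uw; have [[_ h _] _] := fo Uw; exact: h.
have G4 : pu (fun z => dot4 (vpv n z + lam *: vpv a z) (vpv a z)) y = 0.
  by apply: (loc0u oU Uy) => w Uw; have [_ [_ h _]] := fo Uw; exact: h.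
rewrite (pv_dot CP Cau) (vpv_lin lam Cnu Cau) in G1.
rewrite (pu_dot CQ Cau) (vpu_lin lam Cnv Cav) in G2.
rewrite (pv_dot CP Cav) (vpv_lin lam Cnu Cau) in G3.
rewrite (pu_dot CQ Cav) (vpu_lin lam Cnv Cav) in G4.
have [R1 R2] := so_alg (vschwarz oU Sn Uy) (vschwarz oU Sa Uy) G1 G2 G3 G4.
have [nn [nau nav]] := Hn Uy.
have [e1 f1 g1] := HII Uy.
have [[Pau Pav Pn] [Qau Qav Qn]] := fo Uy.
apply: (key ind nn nau nav e1 f1 g1 Pau Pav Pn Qau Qav Qn R1 R2).
move=> n2 h1 h2 h3 h4; exact: (HK n2 (conj h1 (conj h2 h3)) h4).
Qed.

End Local.

Section Box.
Variable R : realType.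

Lemma between_le (a b s : R) : (a <= s <= b) || (b <= s <= a) -> `|a - s| <= `|a - b|.
Proof.
case/orP => /andP[h1 h2].
  have h3 : a <= b by apply: le_trans h2.
  rewrite !(distrC a) !ger0_norm ?subr_ge0 //; first by apply: lerB.
have h3 : b <= a by apply: le_trans h2.
rewrite !ger0_norm ?subr_ge0 //; first by apply: lerB.
Qed.

Lemma const_seg (g : R -> R) a b :
  (forall s, (a <= s <= b) || (b <= s <= a) -> derivable g s 1 /\ derive1 g s = 0) ->
  g a = g b.
Proof.
wlog ab : a b / a <= b.
  move=> W H; case: (leP a b) => ab; first exact: W.
  apply: esym; apply: W; first exact: ltW.
  by move=> s hs; apply: H; rewrite orbC.
move=> H; have [->|ab'] := eqVneq a b; first by [].
have ab2 : a < b by rewrite lt_neqAle ab' ab.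
have [c /andP[c1 c2] E] := mvt ab2 (fun s hs => (H s (introT orP (or_introl hs))).1).
have cb : (a <= c <= b) || (b <= c <= a) by rewrite (ltW c1) (ltW c2).
move: E; rewrite (H c cb).2 mul0r => /eqP; rewrite subr_eq0 => /eqP ->.
by [].
Qed.

Lemma box_const (G : R * R -> R) x e :
  (forall z, `|x.1 - z.1| < e -> `|x.2 - z.2| < e ->
     [/\ derivable (fun s => G (s, z.2)) z.1 1, pu G z = 0,
         derivable (fun t => G (z.1, t)) z.2 1 & pv G z = 0]) ->
  forall y, `|x.1 - y.1| < e -> `|x.2 - y.2| < e -> G y = G x.
Proof.
case: x => x1 x2 /= H [y1 y2] /= h1 h2.
have e0 : 0 < e by apply: le_lt_trans h1.
have A : G (x1, x2) = G (y1, x2).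
  apply: (const_seg (g := fun s => G (s, x2))) => s hs.
  have z2 : `|x2 - x2| < e by rewrite subrr normr0.
  have [d1 p1 _ _] := H (s, x2) (le_lt_trans (between_le hs) h1) z2.
  split; [exact: d1|exact: p1].
have B : G (y1, x2) = G (y1, y2).
  apply: (const_seg (g := fun t => G (y1, t))) => t ht.
  have [_ _ d2 p2] := H (y1, t) h1 (le_lt_trans (between_le ht) h2).
  split; [exact: d2|exact: p2].
by rewrite -B -A.
Qed.
End Box.

Lemma open_loc (M : topologicalType) (S : set M) :
  (forall p, S p -> exists2 W : set M, open W & W p /\ W `<=` S) -> open S.
Proof.
move=> H; rewrite openE => p Sp.
have [W oW [Wp WS]] := H p Sp.
rewrite /interior; apply: (filterS WS); apply: open_nbhs_nbhs; split => //.
Qed.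

Unset Implicit Arguments.
Theorem theorem3p4 (R : realType) (M : topologicalType) (I : Type)
    (U : I -> set (R * R)) (phi : I -> R * R -> M)
    (alpha nu : M -> 'rV[R]_4) (lambda : R) :
  hausdorff_space M ->
  connected [set: M] ->
  oriented_smooth_atlas U phi ->
  immersion U phi alpha ->
  (* nu is a smooth unit normal field along alpha *)
  smooth_map U phi nu ->
  (forall i x, U i x -> unit_normal_at (alpha \o phi i) (nu (phi i x)) x) ->
  (* II_nu = lambda I with lambda a nonzero constant *)
  lambda != 0 ->
  (forall i x, U i x ->
     [/\ sfe (alpha \o phi i) (nu (phi i x)) x = lambda * ffE (alpha \o phi i) x,
         sff (alpha \o phi i) (nu (phi i x)) x = lambda * ffF (alpha \o phi i) x &
         sfg (alpha \o phi i) (nu (phi i x)) x = lambda * ffG (alpha \o phi i) x]) ->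
  (* K(p) <> lambda^2 everywhere *)
  (forall i x (n1 n2 : 'rV[R]_4), U i x ->
     unit_normal_at (alpha \o phi i) n1 x ->
     unit_normal_at (alpha \o phi i) n2 x ->
     dot4 n1 n2 = 0 ->
     gaussK (alpha \o phi i) n1 n2 x != lambda ^+ 2) ->
  (* alpha is hyperspherical, in a hypersphere of radius 1/|lambda| *)
  exists c : 'rV[R]_4, forall p : M,
    dot4 (alpha p - c) (alpha p - c) = 1 / lambda ^+ 2.
Proof.
move=> _ conM [oU _ [_ opn] cover _] [Sa ind] Sn Hn l0 HII HK.
pose Fv := fun p => nu p + lambda *: alpha p.
have loc : forall p, exists2 W : set M, open W & W p /\ forall q, W q -> Fv q = Fv p.
  move=> p; have [i [x [Ux <-]]] := cover p.
  have [e e0 hU] := open_box (oU i) Ux.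
  exists (phi i @` ball x e).
    apply: opn; first exact: ball_open.
    by move=> y [h1 h2]; apply: hU.
  split; first by exists x => //; exact: ballxx.
  move=> q [y [hy1 hy2] <-].
  apply/rowP => k.
  pose G := fun z => Fv (phi i z) 0 k.
  have HG : forall z, `|x.1 - z.1| < e -> `|x.2 - z.2| < e ->
     [/\ derivable (fun s => G (s, z.2)) z.1 1, pu G z = 0,
         derivable (fun t => G (z.1, t)) z.2 1 & pv G z = 0].
    move=> z h1 h2; have Uz := hU z h1 h2.
    have Cn : C1 (fun y => nu (phi i y)) z := C1_0 (Sn i) Uz.
    have Ca : C1 (alpha \o phi i) z := C1_0 (Sa i) Uz.
    have CF := C1_lin lambda Cn Ca.
    have [ML1 ML2] := main_local (oU i) (Sa i) (Sn i) (fun y Uy => Hn i y Uy)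
      (fun y Uy => HII i y Uy) Uz (fun c1 c2 => ind i z c1 c2 Uz)
      (fun n2 hn2 h0 => HK i z _ n2 Uz (Hn i z Uz) hn2 h0).
    have [d1 d2] := CF k.
    split; [exact: d1| |exact: d2|].
    + have E : (vpu (fun y => nu (phi i y) + lambda *: (alpha \o phi i) y) z) 0 k = 0.
        by rewrite (vpu_lin lambda Cn Ca) ML1 mxE.
      move: E; rewrite mxE => E; exact: E.
    + have E : (vpv (fun y => nu (phi i y) + lambda *: (alpha \o phi i) y) z) 0 k = 0.
        by rewrite (vpv_lin lambda Cn Ca) ML2 mxE.
      move: E; rewrite mxE => E; exact: E.
  exact: (box_const HG hy1 hy2).
case: (pselect (exists p : M, True)) => [[p0 _]|noM]; last first.
  by exists 0 => p; exfalso; apply: noM; exists p.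
pose S := [set p | Fv p = Fv p0].
have oS : open S.
  apply: open_loc => p Sp; have [W oW [Wp WF]] := loc p.
  exists W => //; split => // q Wq; rewrite /S /= WF //.
have oSc : open (~` S).
  apply: open_loc => p Sp; have [W oW [Wp WF]] := loc p.
  exists W => //; split => // q Wq; rewrite /setC /S /= WF //.
have ST : S = [set: M].
  apply: conM.
  - by exists p0.
  - by exists S => //; rewrite setTI.
  - by exists S; [rewrite -openC | rewrite setTI].
have FvE : forall p, Fv p = Fv p0.
  by move=> p; have : [set: M] p by []; rewrite -ST.
exists (lambda^-1 *: Fv p0) => p.
have [i [x [Ux <-]]] := cover p.
have [nn _] := Hn i x Ux.
rewrite -(FvE (phi i x)) /Fv.
have -> : alpha (phi i x) - lambda^-1 *: (nu (phi i x) + lambda *: alpha (phi i x)) =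
    (- lambda^-1) *: nu (phi i x).
  by rewrite scalerDr scalerA mulVf // scale1r opprD addrCA subrr addr0 scaleNr.
rewrite dot4Zl dot4Zr nn mulr1.
by rewrite mulrNN -expr2 exprVn div1r.
Qed.
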